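(* Fix $p\ge 1$, $\beta^*\in\mathbb{R}^p$ with support $S^*=\{j:\beta^*_j\neq 0\}$, and $\sigma^2>0$. Then $\mathsf{R}_{\mathtt{oos}}(\beta^*;\mathcal{U}_{\beta^*,\sigma^2})=\sigma^2$, and for every $\beta\in\mathbb{R}^p$, $$\sigma^2\|\beta-\beta^*\|_2^2\;\le\;\mathsf{R}_{\mathtt{oos}}(\beta;\mathcal{U}_{\beta^*,\sigma^2})-\mathsf{R}_{\mathtt{oos}}(\beta^*;\mathcal{U}_{\beta^*,\sigma^2})\;\le\;\sigma^2p^2\|\beta-\beta^*\|_2^2+2\sigma^2p\,\|\beta_{[p]\setminus S^*}\|_2 .$$
   Context: For $S\subseteq[p]$ and $x\in\mathbb{R}^p$, $x_S$ is the subvector of coordinates in $S$. $\mathcal{U}_{\beta^*,\sigma^2}$ is the set of probability distributions $\mu$ of $(x,y)\in\mathbb{R}^p\times\mathbb{R}$ such that $\mathbb{E}_\mu[y\mid x_{S^*}]=(\beta^*_{S^*})^\top x_{S^*}$ and $\mathrm{Var}_\mu[y\mid x_{S^*}]\le\sigma^2$ for $\mu$-a.e. $x$, and $\mathbb{E}_\mu[x_j^2]\le\sigma^2$ for all $j\in[p]$. The out-of-sample risk is $\mathsf{R}_{\mathtt{oos}}(\beta;\mathcal{U}_{\beta^*,\sigma^2})=\sup_{\mu\in\mathcal{U}_{\beta^*,\sigma^2}}\mathbb{E}_{(x,y)\sim\mu}[|y-\beta^\top x|^2]$. *)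

(* Defs.v *)
From HB Require Import structures.
From mathcomp Require Import all_boot all_order all_algebra.
From mathcomp Require Import all_classical all_reals all_analysis.
Set Implicit Arguments. Unset Strict Implicit. Unset Printing Implicit Defensive.
Import Order.TTheory GRing.Theory Num.Theory.
Local Open Scope classical_set_scope.
Local Open Scope ring_scope.

Definition supp {R : realType} {p : nat} (bs : 'rV[R]_p) : set 'I_p :=
  [set j | bs 0 j != 0].

Definition sigma_xS {R : realType} {d} {T : measurableType d} {p : nat}
  (S : set 'I_p) (X : 'I_p -> T -> R) : set (set T) :=
  <<s [set A | exists j B, S j /\ measurable B /\ A = X j @^-1` B] >>.

Definition linpred {R : realType} {T : Type} {p : nat}
  (b : 'rV[R]_p) (X : 'I_p -> T -> R) (w : T) : R :=
  \sum_(j < p) b 0 j * X j w.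

(* The law of (x, y) in U_{beta*, sigma^2}, for (x, y) = ((X j)_j, Y) a random
   vector on a probability space (T, P):
   - E[y | x_{S*}] = beta*_{S*}^T x_{S*}  (defining property of conditional
     expectation: y integrable and E[(y - beta*^T x) 1_A] = 0 for all
     A in sigma(x_{S*}); note beta*^T x = beta*_{S*}^T x_{S*});
   - Var[y | x_{S*}] = E[(y - E[y|x_{S*}])^2 | x_{S*}] <= sigma^2 a.s.
     (i.e. E[(y - beta*^T x)^2 1_A] <= sigma^2 P(A) for all A in sigma(x_{S*}));
   - E[x_j^2] <= sigma^2 for all j. *)
Definition in_U {R : realType} {d} {T : measurableType d} {p : nat}
  (bs : 'rV[R]_p) (sigma2 : R) (P : probability T R)
  (X : 'I_p -> T -> R) (Y : T -> R) : Prop :=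
  [/\ (forall j, measurable_fun setT (X j)) /\ measurable_fun setT Y,
      P.-integrable setT (fun w => (Y w)%:E),
      (forall A, sigma_xS (supp bs) X A ->
          (\int[P]_(w in A) (Y w - linpred bs X w)%:E = 0)%E),
      (forall A, sigma_xS (supp bs) X A ->
          (\int[P]_(w in A) ((Y w - linpred bs X w) ^+ 2)%:E
             <= sigma2%:E * P A)%E) &
      (forall j, (\int[P]_w ((X j w) ^+ 2)%:E <= sigma2%:E)%E)].

Definition R_oos {R : realType} {p : nat} (b bs : 'rV[R]_p) (sigma2 : R) : \bar R :=
  ereal_sup [set r : \bar R | exists (d : measure_display) (T : measurableType d)
     (P : probability T R) (X : 'I_p -> T -> R) (Y : T -> R),
     in_U bs sigma2 P X Y /\
     r = (\int[P]_w ((Y w - linpred b X w) ^+ 2)%:E)%E].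

Definition sqnorm {R : realType} {p : nat} (v : 'rV[R]_p) : R :=
  \sum_(j < p) v 0 j ^+ 2.

Definition off_support_norm {R : realType} {p : nat} (b bs : 'rV[R]_p) : R :=
  Num.sqrt (\sum_(j < p | bs 0 j == 0) b 0 j ^+ 2).

(* Main.v *)
Require Import Defs.
From HB Require Import structures.
From mathcomp Require Import all_boot all_order all_algebra.
From mathcomp Require Import all_classical all_reals all_analysis.
From mathcomp Require Import measurable_realfun unstable.
From mathcomp Require Import ring lra.
Import Order.TTheory GRing.Theory Num.Theory.
Local Open Scope ring_scope.
Local Open Scope classical_set_scope.
Import HBNNSimple.
Import Num.Def.
Import numFieldTopology.Exports numFieldNormedType.Exports.

Lemma int_indic_pre d (T : measurableType d) (R : realType) (P : probability T R)
  (e x : T -> R) (A : set R) :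
  (\int[P]_w (e w * \1_A (x w))%:E = \int[P]_(w in x @^-1` A) (e w)%:E)%E.
Proof.
rewrite [RHS]integral_mkcond; apply: eq_integral => w _.
rewrite /restrict indicE; case: ifPn => /=.
  by rewrite inE => Ax; rewrite mem_set // mulr1.
by rewrite notin_setE => nA; rewrite memNset // mulr0.
Qed.

Lemma core_simple d (T : measurableType d) (R : realType) (P : probability T R)
  (e x : T -> R) (phi : {nnsfun R >-> R}) :
  measurable_fun setT e -> measurable_fun setT x ->
  P.-integrable setT (EFin \o e) ->
  (forall B, measurable B -> (\int[P]_(w in x @^-1` B) (e w)%:E = 0)%E) ->
  (\int[P]_w (e w * phi (x w))%:E = 0)%E.
Proof.
move=> me mx ie h.
have fr := fimfunP phi.
have -> : (fun w => (e w * phi (x w))%:E) = (fun w =>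
   \sum_(y <- finmap.enum_fset (fset_set (range phi)))
      (y%:E * (e w * \1_(phi @^-1` [set y]) (x w))%:E))%E.
  apply/funext => w; rewrite sumEFin; congr EFin.
  rewrite fimfunE fsbig_finite // big_distrr /=; apply: eq_bigr => y _.
  by rewrite mulrCA.
rewrite integral_sum //; last first.
  move=> y; apply: integrableZl => //.
  apply: le_integrable ie => //.
    apply/measurable_EFinP; apply: measurable_funM => //.
    by apply: measurableT_comp => //; apply: measurable_indic.
  move=> w _ /=. rewrite ?abse_EFin lee_fin normrM indicE.
  by case: (_ \in _); rewrite ?normr1 ?normr0 ?mulr1 ?mulr0.
apply: big1 => y _.
rewrite integralZl //; last first.
  apply: le_integrable ie => //.
    apply/measurable_EFinP; apply: measurable_funM => //.
    by apply: measurableT_comp => //; apply: measurable_indic.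
  move=> w _ /=; rewrite ?abse_EFin lee_fin normrM indicE.
  by case: (_ \in _); rewrite ?normr1 ?normr0 ?mulr1 ?mulr0.
rewrite int_indic_pre h ?mule0 //.
Qed.

Lemma core d (T : measurableType d) (R : realType) (P : probability T R)
  (e x : T -> R) :
  measurable_fun setT e -> measurable_fun setT x ->
  P.-integrable setT (EFin \o e) ->
  P.-integrable setT (fun w => (e w * x w)%:E) ->
  (forall B, measurable B -> (\int[P]_(w in x @^-1` B) (e w)%:E = 0)%E) ->
  (\int[P]_w (e w * x w)%:E = 0)%E.
Proof.
move=> me mx ie iex h.
pose fp := fun r : R => (maxr r 0)%:E.
pose fn := fun r : R => (maxr (- r) 0)%:E.
have mfp : measurable_fun setT fp.
  apply/measurable_EFinP; apply: measurable_maxr => //.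
have mfn : measurable_fun setT fn.
  apply/measurable_EFinP; apply: measurable_maxr => //.
have fp0 : forall r, setT r -> (0 <= fp r)%E by move=> r _; rewrite lee_fin le_max lexx orbT.
have fn0 : forall r, setT r -> (0 <= fn r)%E by move=> r _; rewrite lee_fin le_max lexx orbT.
pose ph := nnsfun_approx measurableT mfp.
pose ps := nnsfun_approx measurableT mfn.
have phle n r : ph n r <= maxr r 0.
  by rewrite -lee_fin /ph nnsfun_approxE; exact: (le_approx n fp0).
have psle n r : ps n r <= maxr (- r) 0.
  by rewrite -lee_fin /ps nnsfun_approxE; exact: (le_approx n fn0).
have phcvg r : (fun n => ph n r : R) @ \oo --> (maxr r 0 : R).
  exact: (fine_cvg (cvg_nnsfun_approx measurableT mfp fp0 (I : setT r))).
have pscvg r : (fun n => ps n r : R) @ \oo --> (maxr (- r) 0 : R).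
  exact: (fine_cvg (cvg_nnsfun_approx measurableT mfn fn0 (I : setT r))).
pose f_ := fun n w => (e w * (ph n (x w) - ps n (x w)))%:E.
have iphi n : P.-integrable setT (fun w => (e w * ph n (x w))%:E).
  apply: le_integrable iex => //.
    apply/measurable_EFinP; apply: measurable_funM => //.
    exact: measurableT_comp (measurable_funPT _) mx.
  move=> w _ /=; rewrite lee_fin !normrM ler_wpM2l //.
  rewrite ger0_norm ?fun_ge0 //; apply: (le_trans (phle n _)).
  by rewrite ge_max normr_ge0 ler_norm.
have ipsi n : P.-integrable setT (fun w => (e w * ps n (x w))%:E).
  apply: le_integrable iex => //.
    apply/measurable_EFinP; apply: measurable_funM => //.
    exact: measurableT_comp (measurable_funPT _) mx.
  move=> w _ /=; rewrite lee_fin !normrM ler_wpM2l //.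
  rewrite ger0_norm ?fun_ge0 //; apply: (le_trans (psle n _)).
  by rewrite ge_max normr_ge0 -normrN ler_norm.
have int0 n : (\int[P]_w f_ n w = 0)%E.
  have -> : f_ n = ((fun w => (e w * ph n (x w))%:E) \- (fun w => (e w * ps n (x w))%:E))%E.
    by apply/funext => w; rewrite /f_ /= mulrBr EFinB.
  rewrite integralB // !core_simple //.
  by rewrite subee.
have mf_ : forall n, measurable_fun setT (f_ n).
  move=> n; apply/measurable_EFinP; apply: measurable_funM => //.
  by apply: measurable_funB; exact: measurableT_comp (measurable_funPT _) mx.
have mf : measurable_fun setT (fun w => (e w * x w)%:E).
  by apply/measurable_EFinP; apply: measurable_funM.
have f_f : {ae P, forall w, setT w -> f_ ^~ w @ \oo --> (e w * x w)%:E}.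
  apply: aeW => w _; apply: cvg_EFin; first exact: nearW.
  apply: cvgMr; rewrite [X in _ --> X](_ : _ = maxr (x w) 0 - maxr (- x w) 0).
    exact: cvgB.
  have [hx|hx] := leP 0 (x w).
    have /max_idPr -> : - x w <= 0 by rewrite oppr_le0.
    by rewrite subr0.
  have /max_idPl -> : 0 <= - x w by rewrite oppr_ge0 ltW.
  by rewrite sub0r opprK.
have f_g : {ae P, forall w n, setT w -> (`|f_ n w| <= (abse \o (fun w => (e w * x w)%:E)) w)%E}.
  apply: aeW => w n _ /=; rewrite lee_fin !normrM ler_wpM2l //.
  rewrite (le_trans (ler_normB _ _)) // (ger0_norm (fun_ge0 _)) (ger0_norm (fun_ge0 _)).
  apply: le_trans (lerD (phle n _) (psle n _)) _.
  have [hx|hx] := leP 0 (x w).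
    have /max_idPr -> : - x w <= 0 by rewrite oppr_le0.
    by rewrite addr0 ger0_norm.
  have /max_idPl -> : 0 <= - x w by rewrite oppr_ge0 ltW.
  by rewrite add0r ltr0_norm.
have [_ _ H] := dominated_convergence measurableT mf_ mf f_f (integrable_abse iex) f_g.
move: H; rewrite [X in X @ \oo --> _](_ : _ = cst 0%E); last first.
  by apply/funext => n; exact: int0.
move=> H; have := cvg_lim (@ereal_hausdorff R) H.
by rewrite lim_cst // => /(_ eventually_filter) <-.
Qed.

Lemma normr_le1sq (R : realType) (x : R) : `|x| <= 1 + x ^+ 2.
Proof. have [h|h] := ler0P x; nra. Qed.

Lemma normrM_le (R : realType) (x y : R) : `|x * y| <= x ^+ 2 + y ^+ 2.
Proof.
rewrite normrM; have := sqr_ge0 (`|x| - `|y|).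
rewrite -[x ^+ 2]real_normK ?num_real // -[y ^+ 2]real_normK ?num_real //.
nra.
Qed.

Lemma sq_integrable d (T : measurableType d) (R : realType) (P : probability T R)
  (f : T -> R) : measurable_fun setT f ->
  (\int[P]_w (f w ^+ 2)%:E < +oo)%E ->
  P.-integrable setT (fun w => (f w ^+ 2)%:E).
Proof.
move=> mf h; apply/integrableP; split.
  by apply/measurable_EFinP; exact: measurable_funX.
under eq_integral => w _ do rewrite abse_EFin ger0_norm ?sqr_ge0 //.
exact: h.
Qed.

Lemma l1_of_sq d (T : measurableType d) (R : realType) (P : probability T R)
  (f : T -> R) : measurable_fun setT f ->
  P.-integrable setT (fun w => (f w ^+ 2)%:E) ->
  P.-integrable setT (EFin \o f).
Proof.
move=> mf i2.
have i1 : P.-integrable setT (fun w => (1%:E + (f w ^+ 2)%:E)%E).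
  by apply: (integrableD measurableT _ i2); exact: finite_measure_integrable_cst.
apply: le_integrable i1 => //; first exact/measurable_EFinP.
move=> w _ /=; rewrite lee_fin.
rewrite (ger0_norm (_ : 0 <= 1 + f w ^+ 2)); last by rewrite addr_ge0 ?sqr_ge0.
exact: normr_le1sq.
Qed.

Lemma prod_integrable d (T : measurableType d) (R : realType) (P : probability T R)
  (f g : T -> R) : measurable_fun setT f -> measurable_fun setT g ->
  P.-integrable setT (fun w => (f w ^+ 2)%:E) ->
  P.-integrable setT (fun w => (g w ^+ 2)%:E) ->
  P.-integrable setT (fun w => (f w * g w)%:E).
Proof.
move=> mf mg i1 i2.
have i3 : P.-integrable setT (fun w => ((f w ^+ 2)%:E + (g w ^+ 2)%:E)%E).
  exact: (integrableD measurableT i1 i2).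
apply: le_integrable i3 => //; first by apply/measurable_EFinP; exact: measurable_funM.
move=> w _ /=; rewrite lee_fin.
rewrite (ger0_norm (_ : 0 <= f w ^+ 2 + g w ^+ 2)); last by rewrite addr_ge0 ?sqr_ge0.
exact: normrM_le.
Qed.

Lemma sum_sq_le (R : realType) (n : nat) (a : 'I_n -> R) :
  (\sum_(i < n) a i) ^+ 2 <= n%:R * \sum_(i < n) a i ^+ 2.
Proof.
have -> : (\sum_(i < n) a i) ^+ 2 = \sum_(i < n) \sum_(j < n) a i * a j.
  by rewrite expr2 big_distrl; apply: eq_bigr => i _; rewrite big_distrr.
apply: (le_trans (y := \sum_(i < n) \sum_(j < n) ((a i ^+ 2 + a j ^+ 2) / 2))).
  apply: ler_sum => i _; apply: ler_sum => j _.
  have := sqr_ge0 (a i - a j); nra.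
have S1 : \sum_(i < n) \sum_(j < n) a i ^+ 2 = n%:R * \sum_(i < n) a i ^+ 2.
  rewrite big_distrr /=.
  by apply: eq_bigr => i _; rewrite sumr_const card_ord mulr_natl.
have S2 : \sum_(i < n) \sum_(j < n) a j ^+ 2 = n%:R * \sum_(i < n) a i ^+ 2.
  by rewrite exchange_big.
have -> : \sum_(i < n) \sum_(j < n) ((a i ^+ 2 + a j ^+ 2) / 2) =
   (\sum_(i < n) \sum_(j < n) a i ^+ 2 + \sum_(i < n) \sum_(j < n) a j ^+ 2) / 2.
  rewrite mulrDl !mulr_suml -big_split /=; apply: eq_bigr => i _.
  by rewrite !mulr_suml -big_split /=; apply: eq_bigr => j _; rewrite mulrDl.
rewrite S1 S2; lra.
Qed.

Lemma sigma_xS_T {R : realType} {d} {T : measurableType d} {p : nat}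
  (S : set 'I_p) (X : 'I_p -> T -> R) : sigma_xS S X setT.
Proof.
rewrite /sigma_xS; case: (smallest_sigma_algebra setT
  [set A | exists j B, S j /\ measurable B /\ A = X j @^-1` B]) => h0 hC _.
by have := hC set0 h0; rewrite setD0.
Qed.

Lemma measurable_linpred (R : realType) d (T : measurableType d) (p : nat)
  (b : 'rV[R]_p) (X : 'I_p -> T -> R) :
  (forall j, measurable_fun setT (X j)) -> measurable_fun setT (linpred b X).
Proof.
move=> mX; rewrite /linpred; apply: measurable_sum => j.
by apply: measurable_funM => //; exact: measurable_cst.
Qed.

Lemma main_ub d (T : measurableType d) (R : realType) (P : probability T R)
  (p : nat) (bs b : 'rV[R]_p) (sigma2 : R) (X : 'I_p -> T -> R) (Y : T -> R) :
  0 < sigma2 -> in_U bs sigma2 P X Y ->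
  (\int[P]_w ((Y w - linpred b X w) ^+ 2)%:E <=
   (sigma2 + \sum_(j < p) ((if bs 0 j == 0 then `|b 0 j| else 0) * (sigma2 + sigma2)
      + p%:R * (b 0 j - bs 0 j) ^+ 2 * sigma2))%:E)%E.
Proof.
move=> s0 [[mX mY] iY c3 c4 c5].
pose e := fun w => Y w - linpred bs X w.
have me : measurable_fun setT e.
  by apply: measurable_funB => //; exact: measurable_linpred.
have e2b : (\int[P]_w (e w ^+ 2)%:E <= sigma2%:E)%E.
  by have := c4 _ (sigma_xS_T (supp bs) X); rewrite probability_setT mule1.
have ie2 : P.-integrable setT (fun w => (e w ^+ 2)%:E).
  by apply: sq_integrable => //; apply: le_lt_trans e2b _; exact: ltry.
have iX2 j : P.-integrable setT (fun w => (X j w ^+ 2)%:E).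
  by apply: sq_integrable => //; apply: le_lt_trans (c5 j) _; exact: ltry.
have ie : P.-integrable setT (EFin \o e) by exact: l1_of_sq.
have ieX j : P.-integrable setT (fun w => (e w * X j w)%:E) by exact: prod_integrable.
have eX0 j : bs 0 j != 0 -> (\int[P]_w (e w * X j w)%:E = 0)%E.
  move=> bj; apply: core => //.
  move=> B mB; apply: c3; apply: sub_gen_smallest.
  by exists j, B; split => //; rewrite /supp /=.
pose Dl j := b 0 j - bs 0 j.
pose a j := if bs 0 j == 0 then `|b 0 j| else 0.
pose c j := if bs 0 j == 0 then 0 else 2 * Dl j.
pose D w := \sum_(j < p) Dl j * X j w.
have a0 j : 0 <= a j by rewrite /a; case: ifP.
have eqY w : Y w - linpred b X w = e w - D w.
  rewrite /e /D /linpred -addrA -opprD; congr (_ - _).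
  by rewrite -big_split /=; apply: eq_bigr => j _; rewrite /Dl; ring.
have hD w : D w ^+ 2 <= p%:R * \sum_(j < p) (Dl j ^+ 2 * X j w ^+ 2).
  rewrite (_ : \sum_(j < p) (Dl j ^+ 2 * X j w ^+ 2) = \sum_(j < p) (Dl j * X j w) ^+ 2).
    by rewrite /D; exact: (sum_sq_le _ _ (fun j => Dl j * X j w)).
  by apply: eq_bigr => j _; rewrite exprMn.
have ptw w : (e w - D w) ^+ 2 + \sum_(j < p) c j * (e w * X j w) <=
    e w ^+ 2 + \sum_(j < p) (a j * (e w ^+ 2 + X j w ^+ 2) + p%:R * (Dl j ^+ 2 * X j w ^+ 2)).
  have key j : c j * (e w * X j w) <= 2 * Dl j * (e w * X j w) + a j * (e w ^+ 2 + X j w ^+ 2).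
    rewrite /c /a /Dl; case: eqP => [bj0|_]; last by rewrite mul0r addr0.
    rewrite bj0 subr0 mul0r.
    have := sqr_ge0 (e w + X j w); have := sqr_ge0 (e w - X j w).
    have [h|h] := ler0P (b 0 j); nra.
  have hsum : \sum_(j < p) c j * (e w * X j w) <=
      2 * e w * D w + \sum_(j < p) a j * (e w ^+ 2 + X j w ^+ 2).
    rewrite (_ : 2 * e w * D w = \sum_(j < p) 2 * Dl j * (e w * X j w)); last first.
      by rewrite /D mulr_sumr; apply: eq_bigr => j _; ring.
    by rewrite -big_split; apply: ler_sum => j _; exact: key.
  rewrite big_split /= -mulr_sumr.
  have := hD w; nra.
pose Hf := fun w => ((e w ^+ 2)%:E + \sum_(j < p) ((a j)%:E * ((e w ^+ 2)%:E + (X j w ^+ 2)%:E)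
   + (p%:R * Dl j ^+ 2)%:E * (X j w ^+ 2)%:E))%E.
have HfE w : Hf w = (e w ^+ 2 + \sum_(j < p) (a j * (e w ^+ 2 + X j w ^+ 2)
    + p%:R * (Dl j ^+ 2 * X j w ^+ 2)))%:E.
  rewrite /Hf EFinD -sumEFin; congr (_ + _)%E; apply: eq_bigr => j _.
  by rewrite -EFinD mulrA.
have iH : P.-integrable setT Hf.
  apply: (integrableD measurableT ie2).
  apply: integrable_sum => // j _.
  apply: (integrableD measurableT); apply: integrableZl => //.
  exact: (integrableD measurableT ie2 (iX2 j)).
pose Sf := fun w => (\sum_(j < p) (c j)%:E * (e w * X j w)%:E)%E.
have SfE w : Sf w = (\sum_(j < p) c j * (e w * X j w))%:E.
  by rewrite /Sf -sumEFin; apply: eq_bigr => j _; rewrite EFinM.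
have iS : P.-integrable setT Sf.
  by apply: integrable_sum => // j _; apply: integrableZl => //; exact: ieX.
have S0 : (\int[P]_w Sf w = 0)%E.
  rewrite /Sf integral_sum //; last by move=> j; apply: integrableZl => //; exact: ieX.
  apply: big1 => j _; rewrite integralZl //; rewrite /c; case: ifPn => [_|bj].
    by rewrite mul0e.
  by rewrite eX0 // mule0.
have iF : P.-integrable setT (fun w => ((Y w - linpred b X w) ^+ 2)%:E).
  have i2H : P.-integrable setT (fun w => (2%:E * Hf w)%E) by exact: integrableZl.
  apply: le_integrable i2H => //.
    apply/measurable_EFinP; apply: measurable_funX; apply: measurable_funB => //.
    exact: measurable_linpred.
  move=> w _; rewrite HfE -EFinM !abse_EFin lee_fin eqY.
  rewrite ger0_norm ?sqr_ge0 //.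
  have hpos : 0 <= \sum_(j < p) a j * (e w ^+ 2 + X j w ^+ 2).
    by apply: sumr_ge0 => j _; apply: mulr_ge0 => //; rewrite addr_ge0 ?sqr_ge0.
  have hpos2 : 0 <= \sum_(j < p) (Dl j ^+ 2 * X j w ^+ 2).
    by apply: sumr_ge0 => j _; rewrite mulr_ge0 ?sqr_ge0.
  rewrite big_split /= -mulr_sumr.
  have := hD w; have := sqr_ge0 (e w + D w).
  rewrite ger0_norm; last by rewrite mulr_ge0 // addr_ge0 ?sqr_ge0 // addr_ge0 // mulr_ge0.
  nra.
have iF2 : P.-integrable setT (fun w => \sum_(j < p) ((a j)%:E * ((e w ^+ 2)%:E + (X j w ^+ 2)%:E)
   + (p%:R * Dl j ^+ 2)%:E * (X j w ^+ 2)%:E))%E.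
  apply: integrable_sum => // j _.
  apply: (integrableD measurableT); apply: integrableZl => //.
  exact: (integrableD measurableT ie2 (iX2 j)).
rewrite -[X in (X <= _)%E]adde0 -S0 -integralD //.
apply: le_trans (le_integral measurableT (integrableD measurableT iF iS) iH _) _.
  move=> w _; rewrite SfE HfE eqY -EFinD lee_fin; exact: ptw.
rewrite /Hf integralD // integral_sum //; last first.
  move=> j; apply: (integrableD measurableT); apply: integrableZl => //.
  exact: (integrableD measurableT ie2 (iX2 j)).
rewrite EFinD -sumEFin; apply: leeD => //; apply: lee_sum => j _.
rewrite integralD //; last 2 first.
- by apply: integrableZl => //; exact: (integrableD measurableT ie2 (iX2 j)).
- by apply: integrableZl.
rewrite !integralZl //; last exact: (integrableD measurableT ie2 (iX2 j)).
rewrite integralD // EFinD (EFinM (a j)) EFinD (EFinM _ sigma2); apply: leeD.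
  by apply: lee_wpmul2l; rewrite ?lee_fin //; apply: leeD.
apply: lee_wpmul2l; last exact: c5.
by rewrite lee_fin mulr_ge0 ?sqr_ge0.
Qed.

Lemma sigma_xS_cst {R : realType} {d} {T : measurableType d} {p : nat}
  (S : set 'I_p) (X : 'I_p -> T -> R) (c : 'I_p -> R) :
  (forall j w, X j w = c j) ->
  forall A, sigma_xS S X A -> A = set0 \/ A = setT.
Proof.
move=> Xc A hA.
suff : [set A : set T | A = set0 \/ A = setT] A by [].
apply: (smallest_sub _ _ hA).
- split.
  + by left.
  + move=> B [->|->]; first by right; rewrite setD0.
    by left; rewrite setDv.
  + move=> F hF.
    have [[i Fi]|nF] := pselect (exists i, F i = setT).
      right; apply/seteqP; split => // x _; exists i => //; by rewrite Fi.
    left; apply/seteqP; split => // x [i _ Fix].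
    case: (hF i) => Fi; first by rewrite Fi in Fix.
    by exfalso; apply: nF; exists i.
- move=> B [j [C [_ [_ ->]]]].
  have [Cc|nCc] := pselect (C (c j)).
    by right; apply/seteqP; split => // w _ /=; rewrite Xc.
  by left; apply/seteqP; split => // w /=; rewrite Xc.
Qed.

Lemma sq_sum_abs (R : realType) (n : nat) (u : 'I_n -> R) :
  (forall i, 0 <= u i) -> \sum_(i < n) u i ^+ 2 <= (\sum_(i < n) u i) ^+ 2.
Proof.
move=> u0.
suff [] : \sum_(i < n) u i ^+ 2 <= (\sum_(i < n) u i) ^+ 2 /\ 0 <= \sum_(i < n) u i by [].
apply: (big_rec2 (fun x y => x <= y ^+ 2 /\ 0 <= y)) => //=.
move=> i x y _ [h1 h2]; split; last exact: addr_ge0.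
have := u0 i; nra.
Qed.

Lemma lower_ex (R : realType) (p : nat) (bs b : 'rV[R]_p) (sigma2 : R) :
  0 < sigma2 ->
  ((sigma2 + sigma2 * sqnorm (b - bs))%:E <= R_oos b bs sigma2)%E.
Proof.
move=> s0.
pose s := Num.sqrt sigma2.
have ss : s ^+ 2 = sigma2 by rewrite sqr_sqrtr // ltW.
have sge0 : 0 <= s by exact: sqrtr_ge0.
pose Dl j := b 0 j - bs 0 j.
pose c j := s * Num.sg (Dl j).
pose X := fun (j : 'I_p) (w : bool) => c j.
pose m := \sum_(j < p) bs 0 j * c j.
pose Y := fun w : bool => if w then m + s else m - s.
pose P : probability bool R := bernoulli_prob (2^-1 : R).
have h01 : (0 <= (2^-1 : R) <= 1) by apply/andP; split; lra.
have lpX (bb : 'rV[R]_p) w : linpred bb X w = \sum_(j < p) bb 0 j * c j by [].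
pose D := \sum_(j < p) Dl j * c j.
have hD : \sum_(j < p) b 0 j * c j = m + D.
  rewrite /m /D -big_split /=; apply: eq_bigr => j _; rewrite /Dl; ring.
have mY : measurable_fun setT Y.
  by apply: measurable_fun_ifT => //; exact: measurable_cst.
have inU : in_U bs sigma2 P X Y.
  split.
  - split => //; move=> j; exact: measurable_cst.
  - apply: (le_integrable measurableT _ _ (finite_measure_integrable_cst P (`|m| + s) measurableT)).
      exact/measurable_EFinP.
    move=> w _ /=; rewrite lee_fin [X in _ <= X]ger0_norm ?addr_ge0 //.
    rewrite /Y; case: w.
      by rewrite (le_trans (ler_normD _ _)) // (ger0_norm sge0).
    by rewrite (le_trans (ler_normB _ _)) // (ger0_norm sge0).
  - move=> A /(sigma_xS_cst _ _ c (fun j w => erefl)) [->|->].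
      by rewrite integral_set0.
    have -> : (fun w => (Y w - linpred bs X w)%:E) =
        (fun w => ((if w then s + s else 0)%:E - (cst s w)%:E)%E).
      apply/funext => w; rewrite lpX -/m /Y; case: w; rewrite -EFinB; congr EFin; rewrite /=; lra.
    rewrite (@integralB_EFin _ _ _ P setT (fun w => if w then s + s else 0) (cst s)) //; last first.
    + exact: finite_measure_integrable_cst.
    + apply: (le_integrable measurableT _ _ (finite_measure_integrable_cst P (s + s) measurableT)).
        by apply/measurable_EFinP; apply: measurable_fun_ifT => //; exact: measurable_cst.
      move=> w _ /=; rewrite lee_fin; case: w; rewrite ?normr0 ?normr_ge0 //.
    rewrite (integral_cst P measurableT (s%:E)).
    rewrite [X in (_ * X)%E](_ : _ = 1%E); [rewrite mule1 | exact: probability_setT].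
    rewrite integral_bernoulli_prob //; last by case; rewrite lee_fin ?addr_ge0.
    rewrite mule0 adde0 -EFinM -EFinB; congr EFin; lra.
  - move=> A _.
    rewrite (_ : (fun w => ((Y w - linpred bs X w) ^+ 2)%:E) = cst sigma2%:E).
      by rewrite integral_cst.
    apply/funext => w; rewrite lpX -/m /Y /=; case: w; congr EFin; rewrite -ss; lra.
  - move=> j.
    rewrite (_ : (fun w => (X j w ^+ 2)%:E) = cst ((c j ^+ 2)%:E)) //.
    rewrite integral_cst //.
    rewrite [X in (_ * X)%E](_ : _ = 1%E); [rewrite mule1 lee_fin | exact: probability_setT].
    rewrite /c exprMn ss sqr_sg; case: (_ != 0); rewrite /= ?mulr1 ?mulr0 //; lra.
have hD2 : sigma2 * sqnorm (b - bs) <= D ^+ 2.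
  have -> : D = s * \sum_(j < p) `|Dl j|.
    rewrite /D mulr_sumr; apply: eq_bigr => j _.
    by rewrite /c normrEsg; ring.
  have -> : sqnorm (b - bs) = \sum_(j < p) `|Dl j| ^+ 2.
    by rewrite /sqnorm; apply: eq_bigr => j _; rewrite !mxE real_normK // num_real.
  rewrite exprMn ss; apply: ler_wpM2l; first exact: ltW.
  by apply: sq_sum_abs => j; exact: normr_ge0.
have Hv : (\int[P]_w ((Y w - linpred b X w) ^+ 2)%:E <= R_oos b bs sigma2)%E.
  by apply: ereal_sup_ubound; exists _, _, P, X, Y; split.
apply: le_trans Hv.
rewrite integral_bernoulli_prob //; last by move=> w; rewrite lee_fin sqr_ge0.
rewrite /= !lpX hD /Y -!EFinM -EFinD lee_fin /unstable.onem.
rewrite -ss in hD2 *; nra.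
Qed.

Lemma R_oos_ub (R : realType) (p : nat) (bs b : 'rV[R]_p) (sigma2 : R) :
  0 < sigma2 ->
  (R_oos b bs sigma2 <=
   (sigma2 + \sum_(j < p) ((if bs 0 j == 0 then `|b 0 j| else 0) * (sigma2 + sigma2)
      + p%:R * (b 0 j - bs 0 j) ^+ 2 * sigma2))%:E)%E.
Proof.
move=> s0; apply: ge_ereal_sup => r [d [T [P [X [Y [inU ->]]]]]].
exact: main_ub.
Qed.

Local Close Scope classical_set_scope.

Theorem proposition1 (R : realType) (p : nat) (hp : (1 <= p)%N)
  (bs : 'rV[R]_p) (sigma2 : R) (hs : 0 < sigma2) :
  R_oos bs bs sigma2 = sigma2%:E /\
  forall b : 'rV[R]_p,
    ((sigma2 * sqnorm (b - bs))%:E <= R_oos b bs sigma2 - R_oos bs bs sigma2)%E /\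
    (R_oos b bs sigma2 - R_oos bs bs sigma2 <=
       (sigma2 * (p%:R ^+ 2) * sqnorm (b - bs)
        + 2 * sigma2 * p%:R * off_support_norm b bs)%:E)%E.
Proof.
have Rbs : R_oos bs bs sigma2 = sigma2%:E.
  apply/eqP; rewrite eq_le; apply/andP; split.
    apply: le_trans (R_oos_ub _ _ bs bs _ hs) _; rewrite lee_fin.
    rewrite big1 ?addr0 // => j _; rewrite subrr expr0n /= mulr0 mul0r addr0.
    by case: ifPn => [/eqP ->|]; rewrite ?normr0 mul0r.
  apply: le_trans (lower_ex _ _ bs bs _ hs); rewrite lee_fin.
  have -> : sqnorm (bs - bs) = 0.
    by rewrite /sqnorm big1 // => j _; rewrite !mxE subrr expr0n.
  by rewrite mulr0 addr0.
split => // b; rewrite Rbs; split.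
  rewrite leeBrDr //; apply: le_trans (lower_ex _ _ bs b _ hs); rewrite lee_fin addrC.
  done.
rewrite leeBlDr //; apply: le_trans (R_oos_ub _ _ bs b _ hs) _; rewrite lee_fin.
have aj j : (if bs 0 j == 0 then `|b 0 j| else 0) <= off_support_norm b bs.
  rewrite /off_support_norm; case: ifPn => [bj|_]; last exact: sqrtr_ge0.
  rewrite -sqrtr_sqr; apply: ler_wsqrtr.
  rewrite (bigD1 j) //= lerDl; apply: sumr_ge0 => k _; exact: sqr_ge0.
have h1 : \sum_(j < p) (if bs 0 j == 0 then `|b 0 j| else 0) * (sigma2 + sigma2)
    <= 2 * sigma2 * p%:R * off_support_norm b bs.
  apply: (le_trans (y := \sum_(j < p) off_support_norm b bs * (sigma2 + sigma2))).
    apply: ler_sum => j _; apply: ler_wpM2r; [lra | exact: aj].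
  rewrite sumr_const card_ord -mulr_natr; lra.
have Q0 : 0 <= sqnorm (b - bs) by apply: sumr_ge0 => j _; exact: sqr_ge0.
have h2 : \sum_(j < p) p%:R * (b 0 j - bs 0 j) ^+ 2 * sigma2 = sigma2 * p%:R * sqnorm (b - bs).
  rewrite /sqnorm mulr_sumr; apply: eq_bigr => j _; rewrite !mxE; ring.
have p1 : 1 <= p%:R :> R by rewrite ler1n.
rewrite big_split /= h2.
have : sigma2 * p%:R * sqnorm (b - bs) <= sigma2 * p%:R ^+ 2 * sqnorm (b - bs).
  rewrite expr2 mulrA; apply: ler_wpM2r => //.
  rewrite -[X in X <= _]mulr1 ler_wpM2l //.
  by rewrite mulr_ge0 ?ler0n // ltW.
lra.
Qed.
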